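(* Let $\overline{X}$ be a set, let $k$ divide $T$, and for each interval $j=1,\dots,T/k$ let $f_{j,1},\dots,f_{j,k}:\overline{X}\to[0,n]$ be functions fixed in advance. In the random-costs setting, in each interval $j$ a learner chooses $x_j\in\overline{X}$ (depending only on its own randomness and on previously observed functions), then an index $i_j$ is drawn uniformly from $\{1,\dots,k\}$ independently of everything else, and the learner observes and incurs $f^r_j:=f_{j,i_j}$ at $x_j$. In the corresponding average-costs setting the cost function of interval $j$ is $\overline{f}_j:=\frac1k\sum_{i=1}^k f_{j,i}$. If the learner's strategy has expected average regret at most $R(T)$ in the random-costs setting, i.e. $\frac1T\mathbb{E}\big[\sum_j f^r_j(x_j)-\min_{x\in\overline{X}}\sum_j f^r_j(x)\big]\le R(T)$, then the same strategy (played against the functions $\overline{f}_j$) satisfies $\frac1T\Big(\mathbb{E}\Big[\sum_{j=1}^{T/k}\overline{f}_j(x_j)\Big]-\min_{x\in\overline{X}}\sum_{j=1}^{T/k}\overline{f}_j(x)\Big)\le R(T)+\frac{n}{\sqrt{kT}}.$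
   Context: Sums over $j$ range over the $T/k$ intervals; expectations are over the random indices $i_j$ and the learner's randomness. *)

(* Defs.v *)
From HB Require Import structures.
From mathcomp Require Import all_boot all_order all_algebra.
From mathcomp Require Import all_classical all_reals all_analysis.
Set Implicit Arguments. Unset Strict Implicit. Unset Printing Implicit Defensive.
Import Order.TTheory GRing.Theory Num.Theory.
Local Open Scope ring_scope.

Section OnlineDefs.
Variables (R : realType) (X : Type) (m k : nat).

Definition fbar (f : 'I_m -> 'I_k -> X -> R) (j : 'I_m) (x : X) : R :=
  (k%:R)^-1 * \sum_(i < k) f j i x.

Definition fr (f : 'I_m -> 'I_k -> X -> R) (iota : {ffun 'I_m -> 'I_k})
  (j : 'I_m) : X -> R := f j (iota j).

Definition history (f : 'I_m -> 'I_k -> X -> R) (iota : {ffun 'I_m -> 'I_k})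
  (j : 'I_m) : seq (X -> R) :=
  take j [seq fr f iota l | l <- enum 'I_m].

(* expectation over i_1..i_m drawn i.i.d. uniformly from {1..k} *)
Definition Eunif (F : {ffun 'I_m -> 'I_k} -> R) : R :=
  ((k%:R) ^+ m)^-1 * \sum_(iota : {ffun 'I_m -> 'I_k}) F iota.

Definition best (g : 'I_m -> X -> R) : R :=
  inf (range (fun x : X => \sum_(j < m) g j x)).

End OnlineDefs.

(* Main.v *)
Require Import Defs.
From HB Require Import structures.
From mathcomp Require Import all_boot all_order all_algebra.
From mathcomp Require Import all_classical all_reals all_analysis.
From mathcomp Require Import measurable_realfun.
Import Order.TTheory GRing.Theory Num.Theory.
Local Open Scope ring_scope.

Section Good.
Context {R : realType} {d : measure_display} {Omega : measurableType d}
  (P : probability Omega R).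

Definition good (g : Omega -> R) :=
  measurable_fun setT g /\ exists B : R, forall w, `|g w| <= B.

Lemma good_int g : good g -> P.-integrable setT (EFin \o g).
Proof.
move=> [mg [B hB]]; apply: measurable_bounded_integrable => //.
  have := probability_le1 P (@measurableT _ Omega). move=> h1. exact: (le_lt_trans h1 (ltry _)).
rewrite /bounded_near; near=> M => t _ /=.
apply: (le_trans (hB t)); near: M; apply: nbhs_pinfty_ge.
exact: num_real.
Unshelve. all: by end_near. Qed.

Lemma goodD g h : good g -> good h -> good (fun w => g w + h w).
Proof.
move=> [mg [B hB]] [mh [C hC]]; split; first exact: measurable_funD.
by exists (B + C) => w; rewrite (le_trans (ler_normD _ _))// lerD.
Qed.

Lemma goodZ c g : good g -> good (fun w => c * g w).
Proof.
move=> [mg [B hB]]; split; first exact: measurable_funM.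
by exists (`|c| * B) => w; rewrite normrM ler_wpM2l.
Qed.

Lemma good_sum I (s : seq I) F : (forall i, good (F i)) ->
  good (fun w => \sum_(i <- s) F i w).
Proof.
move=> hF; elim: s => [|i s ih].
  split; first by under eq_fun do rewrite big_nil; exact: measurable_cst.
  by exists 0 => w; rewrite big_nil normr0.
under eq_fun do rewrite big_cons; exact: goodD.
Qed.

Lemma Rint_sum I (s : seq I) F : (forall i, good (F i)) ->
  Rintegral P setT (fun w => \sum_(i <- s) F i w) =
  \sum_(i <- s) Rintegral P setT (F i).
Proof.
move=> hF; elim: s => [|i s ih].
  rewrite big_nil; under eq_Rintegral do rewrite big_nil.
  by rewrite Rintegral_cst// mul0r.
rewrite big_cons -ih; under eq_Rintegral do rewrite big_cons.
rewrite RintegralD//; apply: good_int => //; exact: good_sum.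
Qed.

End Good.
Definition upd {m k : nat} (iota : {ffun 'I_m -> 'I_k}) (j : 'I_m) (i : 'I_k) :
  {ffun 'I_m -> 'I_k} := [ffun l => if l == j then i else iota l].

Lemma comb (R : realType) (Y : Type) (m k : nat) (Hk : (0 < k)%N) (j : 'I_m)
  (G : 'I_k -> Y -> R) (H : {ffun 'I_m -> 'I_k} -> Y)
  (HH : forall iota i, H (upd iota j i) = H iota) :
  \sum_(iota : {ffun 'I_m -> 'I_k}) G (iota j) (H iota) =
  \sum_(iota : {ffun 'I_m -> 'I_k}) ((k%:R)^-1 * \sum_(i < k) G i (H iota)).
Proof.
case: k Hk G H HH => // k _ G H HH.
rewrite -mulr_sumr; apply: (@mulfI _ (k.+1%:R)); first by rewrite pnatr_eq0.
rewrite mulrA mulfV ?pnatr_eq0// mul1r.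
have sh : forall a : 'I_k.+1, \sum_(iota : {ffun 'I_m -> 'I_k.+1}) G (iota j) (H iota)
   = \sum_(iota : {ffun 'I_m -> 'I_k.+1}) G (iota j + a) (H iota).
  move=> a.
  rewrite (reindex_inj (h := fun iota => upd iota j (iota j + a))) /=; last first.
    move=> i1 i2 /= e; apply/ffunP => l.
    have := congr1 (fun f : {ffun _ -> _} => f l) e; rewrite /upd !ffunE.
    case: eqP => [->|//]; exact: addIr.
  by apply: eq_bigr => iota _; rewrite HH /upd ffunE eqxx.
transitivity (\sum_(a < k.+1) \sum_(iota : {ffun 'I_m -> 'I_k.+1}) G (iota j + a) (H iota)).
  rewrite -(eq_bigr _ (fun a _ => sh a)).
  by rewrite sumr_const card_ord mulr_natl.
rewrite exchange_big /=; apply: eq_bigr => iota _.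

by rewrite [RHS](reindex_inj (h := fun i => iota j + i) (@addrI _ (iota j))).
Qed.

Lemma take_map_eq (A B : eqType) (F G : A -> B) (s : seq A) n :
  (forall x, x \in take n s -> F x = G x) -> take n (map F s) = take n (map G s).
Proof. by move=> h; rewrite -!map_take; apply/eq_in_map. Qed.

Lemma history_upd (R : realType) (X : Type) (m k : nat)
  (f : 'I_m -> 'I_k -> X -> R) iota (j : 'I_m) i :
  history f (upd iota j i) j = history f iota j.
Proof.
rewrite /history; apply: take_map_eq => l.
rewrite in_take ?mem_enum // index_enum_ord => lj.
rewrite /fr /upd ffunE; case: eqP => // e.
by rewrite e ltnn in lj.
Qed.

Theorem lemma4p2 (R : realType) (X : Type) (T k : nat) (n RT : R)
  (Hk : (0 < k)%N) (HT : (0 < T)%N) (Hdiv : (k %| T)%N)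
  (f : 'I_(T %/ k) -> 'I_k -> X -> R)
  (Hf : forall j i x, 0 <= f j i x <= n)
  (d : measure_display) (Omega : measurableType d) (P : probability Omega R)
  (sigma : nat -> Omega -> seq (X -> R) -> X)
  (Hmeas : forall (j : nat) (h : seq (X -> R)) (j' : 'I_(T %/ k)) (i : 'I_k),
      measurable_fun setT (fun w => f j' i (sigma j w h)))
  (Hregret :
     (T%:R)^-1 * Eunif (fun iota =>
        Rintegral P setT (fun w =>
          \sum_(j < T %/ k) fr f iota j (sigma j w (history f iota j)))
        - best (fr f iota)) <= RT) :
  (T%:R)^-1 * (Eunif (fun iota =>
        Rintegral P setT (fun w =>
          \sum_(j < T %/ k) fbar f j (sigma j w (history f iota j))))
      - best (fbar f))
    <= RT + n / Num.sqrt ((k * T)%:R).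
Proof.
have [w0 _] : exists w : Omega, True.
  apply: contrapT => hno.
  have e : [set: Omega]%classic = set0.
    by apply/seteqP; split => // w _; apply: hno; exists w.
  have := probability_setT P; rewrite e measure0 => /eqP.
  by rewrite eq_sym onee_eq0.
pose x0 := sigma 0%N w0 [::].
have mpos : (0 < T %/ k)%N by rewrite divn_gt0 // dvdn_leq.
have n0 : 0 <= n.
  by have /andP[h1 h2] := Hf (Ordinal mpos) (Ordinal Hk) x0; exact: le_trans h2.
pose Gf (j : 'I_(T %/ k)) (i : 'I_k) (h : seq (X -> R)) :=
  Rintegral P setT (fun w => f j i (sigma j w h)).
have gf : forall (j : 'I_(T %/ k)) i h, good (fun w => f j i (sigma j w h)).
  move=> j i h; split; first exact: Hmeas.
  exists n => w; have /andP[h1 h2] := Hf j i (sigma j w h).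
  by rewrite ger0_norm.
have key1 : forall iota, Rintegral P setT (fun w =>
      \sum_(j < T %/ k) fr f iota j (sigma j w (history f iota j))) =
    \sum_(j < T %/ k) Gf j (iota j) (history f iota j).
  move=> iota.
  rewrite (@Rint_sum _ _ _ P _ (index_enum _) (fun (j : 'I_(T %/ k)) w => fr f iota j (sigma j w (history f iota j)))) //.
  by move=> j; exact: gf.
have key2 : forall iota, Rintegral P setT (fun w =>
      \sum_(j < T %/ k) fbar f j (sigma j w (history f iota j))) =
    \sum_(j < T %/ k) ((k%:R)^-1 * \sum_(i < k) Gf j i (history f iota j)).
  move=> iota.
  rewrite (@Rint_sum _ _ _ P _ (index_enum _) (fun (j : 'I_(T %/ k)) w => fbar f j (sigma j w (history f iota j)))); last first.
    by move=> j; apply: goodZ; apply: good_sum.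
  apply: eq_bigr => j _; rewrite /fbar RintegralZl //; last first.
    by apply: good_int; apply: good_sum.
  by rewrite (@Rint_sum _ _ _ P _ (index_enum _) (fun (i : 'I_k) w => f j i (sigma j w (history f iota j)))).
have EA : Eunif (fun iota => Rintegral P setT (fun w =>
      \sum_(j < T %/ k) fr f iota j (sigma j w (history f iota j)))) =
    Eunif (fun iota => Rintegral P setT (fun w =>
      \sum_(j < T %/ k) fbar f j (sigma j w (history f iota j)))).
  rewrite /Eunif; congr (_ * _).
  under eq_bigr do rewrite key1.
  under [RHS]eq_bigr do rewrite key2.
  rewrite exchange_big [RHS]exchange_big /=; apply: eq_bigr => j _.
  apply: (@comb _ _ _ _ Hk j (Gf j) (fun iota => history f iota j)).
  by move=> iota i; rewrite history_upd.
have EB : Eunif (fun iota => best (fr f iota)) <= best (fbar f).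
  rewrite /best; apply: lb_le_inf.
    by exists (\sum_(j < T %/ k) fbar f j x0), x0.
  move=> _ [x _ <-].
  have -> : \sum_(j < T %/ k) fbar f j x =
      Eunif (fun iota : {ffun 'I_(T %/ k) -> 'I_k} =>
        \sum_(j < T %/ k) fr f iota j x).
    rewrite /Eunif exchange_big.
    under [in RHS]eq_bigr do
      rewrite (@comb _ _ _ _ Hk _ (fun i (_ : unit) => f _ i x) (fun _ => tt)) // sumr_const.
    rewrite sumrMnl card_ffun !card_ord -[X in _ * X]mulr_natl natrX mulrA mulVf ?mul1r; first by apply: eq_bigr => j _; rewrite /fbar.
    by rewrite expf_neq0 // pnatr_eq0 -lt0n.
  rewrite /Eunif; apply: ler_wpM2l.
    by rewrite invr_ge0 exprn_ge0.
  apply: ler_sum => iota _; apply: ge_inf; last by exists x.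
  exists 0 => _ [y _ <-]; apply: sumr_ge0 => j _.
  by have /andP[] := Hf j (iota j) y.
have EBB : forall F G : {ffun 'I_(T %/ k) -> 'I_k} -> R,
    Eunif (fun iota => F iota - G iota) = Eunif F - Eunif G.
  by move=> F G; rewrite /Eunif sumrB mulrBr.
rewrite EBB in Hregret.
apply: le_trans (_ : _ <= RT) _; last first.
  by rewrite lerDl divr_ge0 // sqrtr_ge0.
apply: le_trans Hregret; apply: ler_wpM2l; first by rewrite invr_ge0 ler0n.
by rewrite EA lerD2l lerN2.
Qed.
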